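(* Let $\ell\geq 1$ be an integer, let $\xi\in\mathbb{R}$, $h\in\mathbb{R}\setminus\{0\}$, and let $x_i=\xi+ih$ for $i=0,1,\ldots,\ell$. Let $\mathbf{a}=(a_0,\ldots,a_\ell)\in\mathbb{R}^{\ell+1}$ and let $q_{\mathbf{a}}$ be the unique real polynomial of degree at most $\ell$ with $q_{\mathbf{a}}(x_i)=a_i$ for $i=0,\ldots,\ell$. For an integer $s\geq 0$ let $A_{s,\mathbf{a}}\in M_{\ell+1}(\mathbb{R})$ be the matrix with entries \[ (A_{s,\mathbf{a}})_{ij}=\big((i-1)(\ell+1)+j\big)^{\ell-1}\quad (1\leq i\leq \ell,\ 1\leq j\leq \ell+1),\qquad (A_{s,\mathbf{a}})_{\ell+1,j}=(j-1)^s a_{j-1}\quad (1\leq j\leq \ell+1), \] i.e. \[ A_{s,\mathbf{a}}=\begin{pmatrix} 1^{\ell-1} & 2^{\ell-1}&\cdots& (\ell+1)^{\ell-1}\\ (\ell+2)^{\ell-1} & (\ell+3)^{\ell-1}&\cdots& (2\ell+2)^{\ell-1}\\ \vdots &\vdots &&\vdots \\ (\ell^{2})^{\ell-1} & (\ell^{2}+1)^{\ell-1} &\cdots& (\ell^2+\ell)^{\ell-1}\\ 0^sa_0 &1^sa_1&\cdots &\ell^sa_\ell \end{pmatrix}. \] Then for an integer $m$ with $0\leq m\leq \ell$, the polynomial $q_{\mathbf{a}}$ has degree exactly $\ell-m$ if and only if $\det A_{s,\mathbf{a}}=0$ for $s=0,\ldots,m-1$ and $\det A_{m,\mathbf{a}}\neq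 0$.
   Context: The convention $0^0=1$ is used in the last row of $A_{s,\mathbf{a}}$. *)

(* Defs.v *)
From HB Require Import structures.
From mathcomp Require Import all_boot all_order all_algebra.
Set Implicit Arguments. Unset Strict Implicit. Unset Printing Implicit Defensive.
Import Order.TTheory GRing.Theory Num.Theory.
Local Open Scope ring_scope.

(* The matrix A_{s,a} of size (l+1) x (l+1), with 0-based indices i j:
   rows i < l : ((i*(l+1) + j + 1))^(l-1)   (1-based: ((i-1)(l+1)+j)^(l-1))
   row  i = l : j^s * a_j   (with 0^0 = 1, which holds for ^+ in MathComp). *)
Definition A_mat (R : realFieldType) (l s : nat) (a : 'I_l.+1 -> R) : 'M[R]_l.+1 :=
  \matrix_(i < l.+1, j < l.+1)
    if (i < l)%N then ((i * l.+1 + j + 1) ^ (l - 1))%:R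
    else (j%:R) ^+ s * a j.

(* Main.v *)
Require Import Defs.
From HB Require Import structures.
From mathcomp Require Import all_boot all_order all_algebra.
From mathcomp Require Import zify ring lra.
Import Order.TTheory GRing.Theory Num.Theory.
Local Open Scope ring_scope.

Section S.
Variable R : realFieldType.

Definition cc (n : nat) (i : nat) : nat := (i * n.+2 + 1)%N.

Definition Gp (n : nat) : 'M[R]_n.+1 :=
  \matrix_(i < n.+1, k < n.+1) (('C(n, k))%:R * ((cc n i)%:R) ^+ (n - k)).

Definition Wm (n : nat) : 'M[R]_n.+2 := Vandermonde n.+2 (\row_(j < n.+2) (j%:R : R)).

Definition kappa n := \det (Gp n) * \det (Wm n).

Lemma cc_neq0 n i : ((cc n i)%:R : R) != 0.
Proof. by rewrite pnatr_eq0 /cc addn1. Qed.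

Lemma Gp_fact n : (Gp n)^T =
  diag_mx (\row_(k < n.+1) ('C(n, k))%:R) *m
  Vandermonde n.+1 (\row_(i < n.+1) ((cc n i)%:R)^-1) *m
  diag_mx (\row_(i < n.+1) ((cc n i)%:R) ^+ n).
Proof.
apply/matrixP => k i; rewrite mul_mx_diag mul_diag_mx !mxE.
rewrite exprVn -mulrA; congr (_ * _).
have hk : (k <= n)%N by rewrite -ltnS.
set c := (cc n i)%:R.
rewrite -[X in _ * c ^+ X](subnK hk) exprD mulrC -mulrA mulfV ?mulr1 //.
by rewrite expf_neq0 // /c cc_neq0.
Qed.

Lemma kappa_neq0 n : kappa n != 0.
Proof.
have h1 : \det (Gp n) != 0.
  rewrite -det_tr Gp_fact !det_mulmx !det_diag det_Vandermonde.
  have a1 : \prod_(k < n.+1) (\row_(k < n.+1) ('C(n, k))%:R : 'rV[R]_n.+1) 0 k != 0.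
    apply/prodf_neq0 => k _; rewrite mxE pnatr_eq0 -lt0n bin_gt0; by rewrite -ltnS.
  have a2 : \prod_(i < n.+1) \prod_(j < n.+1 | (i < j)%N)
      ((\row_(i < n.+1) ((cc n i)%:R)^-1 : 'rV[R]_n.+1) 0 j - (\row_(i < n.+1) ((cc n i)%:R)^-1 : 'rV[R]_n.+1) 0 i) != 0.
    apply/prodf_neq0 => i _; apply/prodf_neq0 => j ij; rewrite !mxE subr_eq0.
    apply/negP => /eqP /invr_inj /eqP; rewrite eqr_nat /cc; apply/negP.
    rewrite eqn_add2r eqn_pmul2r //; by rewrite neq_ltn ij orbT.
  have a3 : \prod_(i < n.+1) (\row_(i < n.+1) ((cc n i)%:R) ^+ n : 'rV[R]_n.+1) 0 i != 0.
    by apply/prodf_neq0 => i _; rewrite mxE expf_neq0 // cc_neq0.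
  by apply: mulf_neq0 => //; apply: mulf_neq0.
rewrite /kappa mulf_neq0 // /Wm det_Vandermonde.
apply/prodf_neq0 => i _; apply/prodf_neq0 => j ij.
by rewrite !mxE subr_eq0 eqr_nat neq_ltn ij orbT.
Qed.

Definition Gm n (f : {poly R}) : 'M[R]_n.+2 :=
  \matrix_(i < n.+2, k < n.+2)
    (if (i < n.+1)%N then ('C(n, k))%:R * ((cc n i)%:R) ^+ (n - k) else f`_k).

Lemma A_fact n s (a : 'I_n.+2 -> R) (f : {poly R}) :
  (size f <= n.+2)%N -> (forall j : 'I_n.+2, f.[j%:R] = j%:R ^+ s * a j) ->
  @A_mat R n.+1 s a = Gm n f *m Wm n.
Proof.
move=> hs hf; apply/matrixP => i j; rewrite !mxE.
under eq_bigr => k _ do rewrite !mxE.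
case: ifP => hi.
  rewrite big_ord_recr /= bin_small // mul0r mul0r addr0.
  have -> : (i * n.+2 + j + 1 = cc n i + j)%N by rewrite /cc addnAC.
  rewrite subSS subn0 natrX natrD exprDn; apply: eq_bigr => k _.
  by rewrite -mulr_natl mulrA.
rewrite -hf (horner_coef_wide _ hs); apply: eq_bigr => k _.
by [].
Qed.

Lemma det_Gm n f : \det (Gm n f) = f`_(n.+1) * \det (Gp n).
Proof.
rewrite (expand_det_col _ ord_max) big_ord_recr /=.
rewrite big1 ?add0r; last first.
  move=> i _; rewrite mxE /= ltn_ord bin_small // mul0r mul0r //.
rewrite mxE /= ltnn; congr (_ * _).
rewrite /cofactor /= -signr_odd addnn odd_double expr0 mul1r.
congr (\det _); apply/matrixP => i k; rewrite !mxE !lift_max /= ltn_ord //.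
Qed.

Lemma det_A n s (a : 'I_n.+2 -> R) (f : {poly R}) :
  (size f <= n.+2)%N -> (forall j : 'I_n.+2, f.[j%:R] = j%:R ^+ s * a j) ->
  \det (@A_mat R n.+1 s a) = f`_(n.+1) * kappa n.
Proof.
move=> hs hf; rewrite (@A_fact n s a f hs hf) det_mulmx det_Gm /kappa mulrA //.
Qed.

End S.

Theorem theorem1 (R : realFieldType) (l : nat) (xi h : R) (a : 'I_l.+1 -> R)
    (q : {poly R}) (m : nat) :
  (1 <= l)%N -> h != 0 ->
  (size q <= l.+1)%N ->
  (forall i : 'I_l.+1, q.[xi + i%:R * h] = a i) ->
  (m <= l)%N ->
  (size q = (l - m).+1)%N <->
  ((forall s : nat, (s < m)%N -> \det (@A_mat R l s a) = 0) /\ \det (@A_mat R l m a) != 0).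
Proof.
move=> Hl Hh Hs Ha Hm.
case: l a Hl Hs Ha Hm => [//|n] a _ Hs Ha Hm.
pose p := q \Po (h%:P * 'X + xi%:P).
have sp : size p = size q.
  by rewrite size_comp_poly2 // size_MXaddC polyC_eq0 (negbTE Hh) /= size_polyC Hh.
have pv : forall j : 'I_n.+2, p.[j%:R] = a j.
  by move=> j; rewrite horner_comp !hornerE -Ha addrC mulrC.
have key : forall s, (s + size q <= n.+2)%N ->
    \det (@A_mat R n.+1 s a) = (if (n.+1 < s)%N then 0 else p`_(n.+1 - s)) * kappa R n.
  move=> s hs; rewrite (@det_A R n s a ('X^s * p)) ?coefXnM //.
    apply: leq_trans (size_polyMleq _ _) _; by rewrite size_polyXn sp addSn.
  by move=> j; rewrite hornerM hornerXn pv.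
have kn := kappa_neq0 R n.
split.
  move=> hd; split.
    move=> s hsm; rewrite key; last by lia.
    rewrite ifN; last by lia.
    by rewrite nth_default ?mul0r // sp hd; lia.
  rewrite key; last by lia.
  rewrite ifN; last by lia.
  rewrite mulf_neq0 //.
  have -> : (n.+1 - m = (size p).-1)%N by rewrite sp hd.
  by rewrite -lead_coefE lead_coef_eq0 -size_poly_eq0 sp hd.
case => H0 Hm0.
have hd1 : (size q <= n.+2 - m)%N.
  rewrite leqNgt; apply/negP => hlt.
  have hs : (n.+2 - size q < m)%N by lia.
  move: (H0 _ hs); rewrite key; last by lia.
  rewrite ifN; last by lia.
  rewrite (_ : (n.+1 - _ = (size p).-1)%N); last by rewrite sp; lia.
  rewrite -lead_coefE => /eqP; rewrite mulf_eq0 (negbTE kn) orbF lead_coef_eq0.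
  rewrite -size_poly_eq0 sp => /eqP hq0; lia.
move: Hm0; rewrite key; last by lia.
rewrite ifN; last by lia.
move=> hne.
have : (n.+1 - m < size p)%N.
  rewrite ltnNge; apply/negP => hle; move: hne; by rewrite nth_default // mul0r eqxx.
rewrite sp => ?; lia.
Qed.
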